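(* For every $n\ge 0$, the number of self-describing sequences in $\mathcal{A}_n$ (equivalently, the number of members of the Catalan family $\mathcal{C}$ of length $n+1$) equals the Catalan number $c_{n+1}$. Moreover, for each $r=0,\dots,n$, the number of self-describing sequences $(a_0,\dots,a_n)\in\mathcal{A}_n$ with last term $a_n=r$ equals $c_r c_{n-r}$.
   Context: $\mathcal{A}_n$ is the set of integer sequences $a=(a_0,\dots,a_n)$ with $0\le a_i\le i$ for all $i$. A sequence is self-describing if $\#\{j: j<i,\ a_j<a_i\}=a_i$ for every index $i$. The Catalan numbers are $c_m=\frac{1}{m+1}\binom{2m}{m}$. The Catalan family $\mathcal{C}$ is defined recursively together with, for each member $a$, a ''sibling list'' $L(a)$: $(0)\in\mathcal{C}$ with $L((0))=(0)$. If $a=(a_0,\dots,a_n)\in\mathcal{C}$ with $L(a)=(s_0,s_1,\dots,s_m)$ and $a_n=s_i$, then the children of $a$ are $(a_0,\dots,a_n,t)$ for $t\in\{s_0,\dots,s_i,n+1\}$, all in $\mathcal{C}$, each with sibling list $(s_0,\dots,s_i,n+1)$; $\mathcal{C}$ consists exactly of the sequences obtained this way. (Its members are exactly the self-describing sequences.) *)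

(* Defs.v *)
From mathcomp Require Import all_boot.
Set Implicit Arguments. Unset Strict Implicit. Unset Printing Implicit Defensive.

(* A sequence (a_0,...,a_n) with entries in {0..n} is represented as a
   finite function 'I_n.+1 -> 'I_n.+1 ; a_i <= i <= n so nothing is lost. *)

Definition inA (n : nat) (a : {ffun 'I_n.+1 -> 'I_n.+1}) : bool :=
  [forall i : 'I_n.+1, (a i <= i)%N].

Definition self_describing (n : nat) (a : {ffun 'I_n.+1 -> 'I_n.+1}) : bool :=
  [forall i : 'I_n.+1,
     #|[pred j : 'I_n.+1 | (j < i)%N && (a j < a i)%N]| == nat_of_ord (a i)].

(* Catalan numbers c_m = binom(2m, m) / (m+1) (exact division). *)
Definition catalan (m : nat) : nat := 'C(m.*2, m) %/ m.+1.

(* Main.v *)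
Require Import Defs.
From mathcomp Require Import all_boot zify.
Set Implicit Arguments. Unset Strict Implicit.

Lemma cat_mul m : catalan m * m.+1 = 'C(m.*2, m).
Proof.
have H := mul_bin_left m.*2 m.
have E : m.*2 - m = m by lia.
rewrite E in H.
have Hd : m.+1 %| 'C(m.*2, m).
  apply/dvdnP; exists ('C(m.*2, m) - 'C(m.*2, m.+1)).
  move: H; move: ('C(m.*2, m)) ('C(m.*2, m.+1)) => d e H.
  have le : e <= d by nia.
  rewrite mulnBl; nia.
by rewrite /catalan divnK.
Qed.

Lemma cat_rec m : catalan m.+1 * m.+2 = 2 * (m.*2.+1) * catalan m.
Proof.
have H1 := cat_mul m.+1.
have H0 := cat_mul m.
have H2 := mul_bin_diag m.*2.+1 m.
have H3 : 'C((m.+1).*2, m.+1) = 2 * 'C(m.*2.+1, m.+1).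
  have -> : (m.+1).*2 = (m.*2.+1).+1 by lia.
  rewrite binS.
  have := bin_sub (n := m.*2.+1) (m := m.+1).
  have -> : m.*2.+1 - m.+1 = m by lia. move=> ->; lia.
rewrite /= in H2.
have : m.+1 * (catalan m.+1 * m.+2) = m.+1 * (2 * m.*2.+1 * catalan m).
  nia.
by move/eqP; rewrite eqn_mul2l /= => /eqP.
Qed.

Definition u n := \sum_(r < n.+1) catalan r * catalan (n - r).
Definition w n := \sum_(r < n.+1) r * (catalan r * catalan (n - r)).

Lemma w_sym n : 2 * w n = n * u n.
Proof.
have E : w n = \sum_(r < n.+1) (n - r) * (catalan r * catalan (n - r)).
  rewrite /w (reindex_inj rev_ord_inj) /=.
  apply: eq_bigr => i _; rewrite subSS.
  have Hi := ltn_ord i.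
  have -> : n - (n - i) = i by lia. lia.
have -> : 2 * w n = w n + w n by lia.
rewrite /u big_distrr /= {1}E /w -big_split /=.
apply: eq_bigr => i _; have Hi := ltn_ord i.
rewrite -mulnDl; congr (_ * _); lia.
Qed.

Lemma u_cat n : u n = catalan n.+1.
Proof.
elim: n => [|n IH].
  by rewrite /u big_ord1.
have S1 : \sum_(r < n.+2) r.+1 * (catalan r * catalan (n.+1 - r)) = w n.+1 + u n.+1.
  rewrite /w /u -big_split /=; apply: eq_bigr => i _; lia.
have S2 : \sum_(r < n.+2) r.+1 * (catalan r * catalan (n.+1 - r)) =
   catalan n.+1 + 4 * w n + 2 * u n.
  rewrite big_ord_recl /= subn0.
  have -> : catalan 0 = 1 by [].
  rewrite /w /u !big_distrr -!addnA -big_split /=.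
  rewrite ?mul1n ?muln1; congr (_ + _); apply: eq_bigr => i _.
  rewrite /bump /= add1n subSS.
  have := cat_rec i. nia.
have Hs := w_sym n.+1. have Hs0 := w_sym n.
have Hr := cat_rec n.+1.
have : n.+3 * u n.+1 = n.+3 * catalan n.+2 by nia.
by move/eqP; rewrite eqn_mul2l /= => /eqP.
Qed.

Fixpoint sdaux (pre rest : seq nat) : bool :=
  match rest with
  | [::] => true
  | x :: r => (count (fun y => y < x) pre == x) && sdaux (rcons pre x) r
  end.
Definition sds s := sdaux [::] s.

Lemma sdaux_cat pre r1 r2 :
  sdaux pre (r1 ++ r2) = sdaux pre r1 && sdaux (pre ++ r1) r2.
Proof.
elim: r1 pre => [|x r1 IH] pre /=; first by rewrite cats0.
by rewrite IH cat_rcons andbA.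
Qed.

Lemma sdaux_nth pre rest : sdaux pre rest =
  all (fun i => count (fun y => y < nth 0 rest i) (pre ++ take i rest) == nth 0 rest i)
      (iota 0 (size rest)).
Proof.
elim: rest pre => [|x r IH] pre //=.
rewrite ?take0 ?cats0 IH -(addn0 1) iotaDl all_map; congr (_ && _).
by apply: eq_all => i /=; rewrite add0n cat_rcons.
Qed.

Lemma sds_at s k : sds s -> k < size s ->
  count (fun y => y < nth 0 s k) (take k s) = nth 0 s k.
Proof.
rewrite /sds sdaux_nth => /allP H Hk.
by apply/eqP; have := H k; rewrite mem_iota /= => ->.
Qed.

Lemma sds_le s k : sds s -> k < size s -> nth 0 s k <= k.
Proof.
move=> Hs Hk; rewrite -(sds_at Hs Hk).
apply: leq_trans (count_size _ _) _; rewrite size_take; case: ifP => //; lia.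
Qed.

Lemma sds_take s k : sds s -> sds (take k s).
Proof. by rewrite /sds -{1}(cat_take_drop k s) sdaux_cat => /andP[]. Qed.

Lemma sds_lower s L v : sds s -> L <= size s -> v <= L ->
  v <= count (fun y => y < v) (take L s).
Proof.
move=> Hs; elim: L v => [|L IH] v HL Hv; first by case: v Hv.
rewrite (take_nth 0) //; rewrite -cats1 count_cat.
case: (ltnP v L.+1) => Hv'.
  by apply: leq_trans (IH v (ltnW HL) Hv') (leq_addr _ _).
have -> : v = L.+1 by lia.
have Hall : all (fun y => y < L.+1) (take L s ++ [:: nth 0 s L]).
  rewrite cats1 -take_nth //.
  apply/(all_nthP 0) => j; rewrite size_takel // => Hj.
  rewrite nth_take //; have := sds_le Hs (leq_trans Hj HL); lia.
move: Hall; rewrite all_count count_cat size_cat size_take /= .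
have -> : (L < size s) = true by apply/idP.
by move=> /eqP ->; rewrite addn1.
Qed.

Lemma sdaux_shift pre q rest r : all (fun y => y < r) pre -> size pre = r ->
  sdaux (pre ++ map (addn r) q) (map (addn r) rest) = sdaux q rest.
Proof.
move=> Hp Hs; elim: rest q => [|x rest IH] q //=.
rewrite rcons_cat -map_rcons IH; congr (_ && _).
rewrite count_cat count_map.
have -> : count (fun y => y < r + x) pre = r.
  rewrite -Hs; apply/eqP; rewrite -all_count.
  by apply: sub_all Hp => y /= Hy; lia.
rewrite eqn_add2l; congr (_ == _); apply: eq_count => y /=; lia.
Qed.

Lemma sds_bound s : sds s -> all (fun y => y < size s) s.
Proof.
move=> Hs; apply/(all_nthP 0) => j Hj; have := sds_le Hs Hj; lia.
Qed.

Definition comb r xs ys := xs ++ map (addn r) ys ++ [:: r].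

Lemma sds_comb r xs ys : size xs = r -> sds xs -> sds ys -> sds (comb r xs ys).
Proof.
move=> Hx Sx Sy; rewrite /sds /comb !sdaux_cat.
have Ha : all (fun y => y < r) xs by rewrite -Hx; exact: sds_bound.
rewrite -/(sds xs) Sx /=.
have -> : sdaux ([::] ++ xs) (map (addn r) ys) = sdaux [::] ys.
  by rewrite /= -(sdaux_shift [::] ys Ha Hx) /= cats0.
rewrite -/(sds ys) Sy /= andbT count_cat count_map.
have -> : count (fun y => y < r) xs = r.
  by apply/eqP; rewrite -{2}Hx -all_count.
have -> : count (preim (addn r) (fun y => y < r)) ys = 0.
  by apply/eqP; rewrite -leqn0 leqNgt -has_count; apply/hasP => -[y _ /=]; lia.
by rewrite addn0.
Qed.

Lemma sds_decomp s n : sds s -> size s = n.+1 ->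
  let r := nth 0 s n in
  exists xs ys, [/\ s = comb r xs ys, size xs = r, size ys = n - r, sds xs & sds ys].
Proof.
move=> Hs Hsz r.
have Hrn : r <= n by apply: sds_le Hs _; rewrite Hsz.
have Hc : count (fun y => y < r) (take n s) = r by apply: sds_at Hs _; rewrite Hsz.
have Hsmall : forall k, k < n -> nth 0 s k < r -> k < r.
  move=> k Hk Hkr; rewrite ltnNge; apply/negP => Hrk.
  have HkS : k <= size s by rewrite Hsz; lia.
  have H1 := sds_lower Hs HkS Hrk.
  have : count (fun y => y < r) (take k.+1 s) <= count (fun y => y < r) (take n s).
    rewrite -(cat_take_drop k.+1 (take n s)) take_takel // count_cat; lia.
  rewrite (take_nth 0) ?Hsz; last by lia.
  rewrite -cats1 count_cat /= Hkr; lia.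
set mid := drop r (take n s).
have Hmid : all (fun y => r <= y) mid.
  apply/(all_nthP 0) => j; rewrite size_drop size_take Hsz ltnS leqnn => Hj.
  rewrite nth_drop nth_take; last by lia.
  rewrite leqNgt; apply/negP => /Hsmall; lia.
have Hsx : size (take r s) = r by rewrite size_take Hsz; case: ifP; lia.
have Hxs : all (fun y => y < r) (take r s).
  rewrite all_count Hsx; move: Hc.
  rewrite -(cat_take_drop r (take n s)) take_takel // count_cat -/mid.
  have -> : count (fun y => y < r) mid = 0.
    apply/eqP; rewrite -leqn0 leqNgt -has_count; apply/hasP => -[y Hy /= Hyr].
    by have := allP Hmid y Hy; lia.
  by rewrite addn0 => ->.
have Es : s = take r s ++ mid ++ [:: r].
  rewrite catA /mid -{1}(take_takel s Hrn) cat_take_drop cats1 /r -take_nth ?Hsz //.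
  by rewrite -Hsz take_size.
exists (take r s), (map (subn^~ r) mid).
have Em : map (addn r) (map (subn^~ r) mid) = mid.
  rewrite -map_comp -{2}(map_id mid); apply/eq_in_map => y /(allP Hmid) /=; lia.
split => //.
- by rewrite /comb Em.
- by rewrite size_map /mid size_drop size_take Hsz ltnS leqnn.
- exact: sds_take.
move: Hs; rewrite /sds {1}Es !sdaux_cat => /and3P[_ + _].
by rewrite -{1}Em -(sdaux_shift [::] _ Hxs Hsx) cats0.
Qed.

Definition tos m (a : {ffun 'I_m -> 'I_m}) : seq nat := [seq val (a i) | i <- enum 'I_m].
Definition ofs m (s : seq nat) : {ffun 'I_m -> 'I_m} := [ffun i : 'I_m => insubd i (nth 0 s i)].

Lemma size_tos m (a : {ffun 'I_m -> 'I_m}) : size (tos a) = m.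
Proof. by rewrite size_map size_enum_ord. Qed.

Lemma nth_tos m (a : {ffun 'I_m -> 'I_m}) (i : 'I_m) : nth 0 (tos a) i = a i.
Proof. by rewrite (nth_map i) ?size_enum_ord // nth_ord_enum. Qed.

Lemma tos_inj m (a b : {ffun 'I_m -> 'I_m}) : tos a = tos b -> a = b.
Proof. by move=> E; apply/ffunP => i; apply: ord_inj; rewrite -!nth_tos E. Qed.

Lemma tos_ofs m s : size s = m -> all (fun y => y < m) s -> tos (ofs m s) = s.
Proof.
move=> Hs Ha; apply: (@eq_from_nth _ 0); first by rewrite size_tos.
move=> j; rewrite size_tos => Hj.
rewrite -[j]/(val (Ordinal Hj)) nth_tos ffunE val_insubd /=.
by rewrite (all_nthP 0 Ha) // Hs.
Qed.

Lemma ofs_tos m (a : {ffun 'I_m -> 'I_m}) : ofs m (tos a) = a.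
Proof. apply/ffunP => i; apply: ord_inj; rewrite ffunE val_insubd nth_tos. by rewrite (fintype.ltn_ord (a i)). Qed.

Lemma count_take_ord m (i : 'I_m) (Q : pred 'I_m) :
  count (fun j : 'I_m => (j < i) && Q j) (enum 'I_m) = count Q (take i (enum 'I_m)).
Proof.
rewrite -{1}(cat_take_drop i (enum 'I_m)) count_cat.
have Ht : forall j : 'I_m, j \in take i (enum 'I_m) -> j < i.
  move=> j Hj; have : val j \in map val (take i (enum 'I_m)) by apply: map_f.
  by rewrite map_take val_enum_ord take_iota mem_iota /=; lia.
have Hd : forall j : 'I_m, j \in drop i (enum 'I_m) -> i <= j.
  move=> j Hj; have : val j \in map val (drop i (enum 'I_m)) by apply: map_f.
  by rewrite map_drop val_enum_ord drop_iota mem_iota /=; lia.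
have -> : count (fun j : 'I_m => (j < i) && Q j) (drop i (enum 'I_m)) = 0.
  apply/eqP; rewrite -leqn0 leqNgt -has_count; apply/hasP => -[j Hj /=].
  by have := Hd j Hj; lia.
rewrite addn0; apply: eq_in_count => j Hj /=.
by rewrite (Ht j Hj).
Qed.

Lemma card_pred_count m (a : {ffun 'I_m -> 'I_m}) (i : 'I_m) :
  #|[pred j : 'I_m | (j < i) && (a j < a i)]| = count (fun y => y < a i) (take i (tos a)).
Proof.
rewrite cardE /enum_mem size_filter /tos -map_take count_map.
rewrite -enumT -count_take_ord; by apply: eq_count => j.
Qed.

Lemma sd_sds n (a : {ffun 'I_n.+1 -> 'I_n.+1}) : self_describing a = sds (tos a).
Proof.
rewrite /sds sdaux_nth size_tos /self_describing.
apply/forallP/allP => H.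
- move=> k; rewrite mem_iota /= => Hk.
  have := H (Ordinal Hk); rewrite card_pred_count /=.
  by rewrite -[k]/(nat_of_ord (Ordinal Hk)) nth_tos.
- move=> i; rewrite card_pred_count -nth_tos.
  by apply: H; rewrite mem_iota /=.
Qed.

Lemma sd_inA n (a : {ffun 'I_n.+1 -> 'I_n.+1}) : self_describing a -> inA a.
Proof.
move=> /forallP H; apply/forallP => i; have := H i.
rewrite card_pred_count => /eqP <-.
apply: leq_trans (count_size _ _) _; rewrite size_take size_tos.
case: ifP => //; lia.
Qed.

Definition SD m := [set a : {ffun 'I_m -> 'I_m} | sds (tos a)].

Lemma comb_props r n xs ys : r <= n -> size xs = r -> size ys = n - r -> sds xs -> sds ys ->
  size (comb r xs ys) = n.+1 /\ all (fun y => y < n.+1) (comb r xs ys).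
Proof.
move=> Hr Hx Hy Sx Sy; rewrite /comb size_cat size_cat size_map Hx Hy /=; split; first lia.
rewrite all_cat all_cat /= andbT; apply/and3P; split.
- by apply: sub_all (sds_bound Sx) => y /=; rewrite Hx; lia.
- rewrite all_map; apply: sub_all (sds_bound Sy) => y /=; rewrite Hy; lia.
- lia.
Qed.

Lemma card_r n r : r <= n ->
  #|[set a : {ffun 'I_n.+1 -> 'I_n.+1} | sds (tos a) && (nat_of_ord (a ord_max) == r)]|
  = #|SD r| * #|SD (n - r)|.
Proof.
move=> Hr; rewrite -cardsX.
pose phi (p : {ffun 'I_r -> 'I_r} * {ffun 'I_(n - r) -> 'I_(n - r)}) :=
  ofs n.+1 (comb r (tos p.1) (tos p.2)).
have Hphi : forall p, p \in setX (SD r) (SD (n - r)) ->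
    tos (phi p) = comb r (tos p.1) (tos p.2).
  move=> [x y]; rewrite !inE /= => /andP[Sx Sy].
  have [H1 H2] := comb_props Hr (size_tos x) (size_tos y) Sx Sy.
  by rewrite /phi tos_ofs.
have -> : [set a : {ffun 'I_n.+1 -> 'I_n.+1} | sds (tos a) && (nat_of_ord (a ord_max) == r)]
   = phi @: setX (SD r) (SD (n - r)).
  apply/setP => a; rewrite inE; apply/idP/imsetP.
  - move=> /andP[Sa /eqP Ha].
    have [xs [ys [E Hx Hy Sx Sy]]] := sds_decomp Sa (size_tos a).
    have Hn : nth 0 (tos a) n = r by rewrite -Ha -(nth_tos a ord_max).
    rewrite Hn in E Hx Hy.
    have Tx : tos (ofs r xs) = xs by rewrite tos_ofs // -{1}Hx; exact: sds_bound.
    have Ty : tos (ofs (n - r) ys) = ys by rewrite tos_ofs // -{1}Hy; exact: sds_bound.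
    exists (ofs r xs, ofs (n - r) ys).
      by rewrite !inE /= Tx Ty Sx Sy.
    apply: tos_inj; rewrite Hphi; first by rewrite /= Tx Ty.
    by rewrite !inE /= Tx Ty Sx Sy.
  - move=> [p Hp ->].
    have Ep := Hphi p Hp.
    move: Hp; case: p Ep => x y /= Ep; rewrite !inE /= => /andP[Sx Sy].
    rewrite Ep sds_comb ?size_tos //=.
    rewrite -(nth_tos _ ord_max) Ep /comb catA cats1 nth_rcons size_cat size_map !size_tos /=.
    have -> : (n < r + (n - r)) = false by lia.
    by have -> : (n == r + (n - r)) = true by lia.
apply: card_in_imset => p q Hp Hq E.
have := Hphi p Hp; have := Hphi q Hq; rewrite E => -> /eqP.
rewrite /comb eqseq_cat ?size_tos // => /andP[/eqP E1].
rewrite eqseq_cat ?size_map ?size_tos // => /andP[/eqP /(inj_map (@addnI r)) E2 _].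
move: p q E1 E2 {Hp Hq E} => [x1 y1] [x2 y2] /= /tos_inj -> /tos_inj -> //.
Qed.

Lemma card_total n :
  #|SD n.+1| = \sum_(r < n.+1) #|[set a : {ffun 'I_n.+1 -> 'I_n.+1} | sds (tos a) && (nat_of_ord (a ord_max) == r)]|.
Proof.
rewrite -sum1_card (partition_big (fun a : {ffun 'I_n.+1 -> 'I_n.+1} => a ord_max) xpredT) //=.
apply: eq_bigr => j _; rewrite -sum1_card; apply: eq_bigl => a; rewrite !inE.
by congr (_ && _).
Qed.

Lemma SD_cat m : #|SD m| = catalan m.
Proof.
elim/ltn_ind: m => -[|n] IH.
  rewrite /SD.
  have -> : [set a : {ffun 'I_0 -> 'I_0} | sds (tos a)] = setT.
    by apply/setP => a; rewrite !inE /tos enum_ord0.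
  by rewrite cardsT card_ffun !card_ord.
rewrite card_total -u_cat /u; apply: eq_bigr => r _.
have Hr := ltn_ord r.
rewrite card_r // IH // IH //; lia.
Qed.

Theorem theorem3 (n : nat) :
  #|[set a : {ffun 'I_n.+1 -> 'I_n.+1} | inA a && self_describing a]| = catalan n.+1
  /\ forall r : nat, (r <= n)%N ->
     #|[set a : {ffun 'I_n.+1 -> 'I_n.+1} |
          [&& inA a, self_describing a & nat_of_ord (a ord_max) == r]]|
       = catalan r * catalan (n - r).
Proof.
split.
- rewrite -SD_cat; congr #|pred_of_set _|; apply/setP => a; rewrite !inE.
  case Ha: (self_describing a); last by rewrite andbF -sd_sds Ha.
  by rewrite (sd_inA Ha) -sd_sds Ha.
- move=> r Hr; rewrite -!SD_cat -card_r //; congr #|pred_of_set _|.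
  apply/setP => a; rewrite !inE.
  case Ha: (self_describing a); last by rewrite andbF -sd_sds Ha.
  by rewrite (sd_inA Ha) -sd_sds Ha.
Qed.
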